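(* Let $r>0$ and $A=\mathbb{Z}^r$ with its standard generating set (the standard basis vectors). Then for every $n\in\mathbb{N}$, the number of $\operatorname{Aut}(A)$-orbits of $A$ containing an element of word length at most $n$ is exactly $n+1$.
   Context: Word length of $g$ with respect to a generating set $\Sigma$ is the least $n$ such that $g$ is a product of $n$ elements of $\Sigma\cup\Sigma^{-1}$. *)

(* Defs.v *)
(* A = Z^r modelled as row vectors 'rV[int]_r. *)
From HB Require Import structures.
From mathcomp Require Import all_boot all_order all_algebra.
Set Implicit Arguments. Unset Strict Implicit. Unset Printing Implicit Defensive.
Import Order.TTheory GRing.Theory Num.Theory.
Local Open Scope ring_scope.

Definition is_aut (r : nat) (f : 'rV[int]_r -> 'rV[int]_r) : Prop :=
  {morph f : x y / x + y} /\ bijective f.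

Definition same_orbit (r : nat) (x y : 'rV[int]_r) : Prop :=
  exists f, is_aut f /\ f x = y.

Definition gen_pm (r : nat) (v : 'rV[int]_r) : Prop :=
  exists i : 'I_r, v = delta_mx 0 i \/ v = - delta_mx 0 i.

Definition is_word (r : nat) (s : seq 'rV[int]_r) (g : 'rV[int]_r) : Prop :=
  (forall v, v \in s -> gen_pm v) /\ \sum_(v <- s) v = g.

Definition word_length (r : nat) (g : 'rV[int]_r) (n : nat) : Prop :=
  (exists s, size s = n /\ is_word s g) /\
  (forall s, is_word s g -> (n <= size s)%N).

(* Main.v *)
Require Import Defs.
From mathcomp Require Import all_boot all_order all_algebra.
Set Implicit Arguments. Unset Strict Implicit. Unset Printing Implicit Defensive.
Import Order.TTheory GRing.Theory Num.Theory.
Local Open Scope ring_scope.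

Lemma entry_bound r (s : seq 'rV[int]_r) g j :
  is_word s g -> `|g 0 j| <= (size s)%:R.
Proof.
case=> hs <-; elim: s hs => [|v s IH] hs.
  by rewrite big_nil mxE normr0.
rewrite big_cons mxE /= -[(size s).+1]addn1 natrD addrC.
apply: (le_trans (ler_normD _ _)); apply: lerD.
  by apply: IH => w hw; apply: hs; rewrite in_cons hw orbT.
have [i [->|->]] := hs v (mem_head _ _); rewrite ?mxE ?normrN;
  by case: (_ && _).
Qed.

Lemma morph0 r (f : 'rV[int]_r -> 'rV[int]_r) : {morph f : x y / x + y} -> f 0 = 0.
Proof. move=> hf; have h : f 0 + f 0 = f 0 + 0 by rewrite -hf !addr0.
exact: addrI h. Qed.

Lemma morphMn r (f : 'rV[int]_r -> 'rV[int]_r) : {morph f : x y / x + y} ->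
  forall y d, f (y *+ d) = f y *+ d.
Proof.
move=> hf y; elim=> [|d IH]; first by rewrite !mulr0n morph0.
by rewrite !mulrS hf IH.
Qed.

Lemma aut_inv r (f : 'rV[int]_r -> 'rV[int]_r) : is_aut f ->
  exists g, [/\ is_aut g, cancel g f & cancel f g].
Proof.
case=> hf [g fg gf]; exists g; split=> //; split; last by exists f.
by move=> x y; apply: (can_inj fg); rewrite hf !gf.
Qed.

Definition Pd r (d : nat) (x : 'rV[int]_r) := exists y, x = y *+ d.

Lemma Pd_orbit r d (x z : 'rV[int]_r) : same_orbit x z -> Pd d x -> Pd d z.
Proof. by case=> f [[hf _] <-] [y ->]; exists (f y); rewrite morphMn. Qed.

Lemma same_orbit_sym r (x z : 'rV[int]_r) : same_orbit x z -> same_orbit z x.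
Proof. by case=> f [hf <-]; have [g [hg _ fg]] := aut_inv hf; exists g. Qed.

Lemma wl_e0 r (i : nat) : word_length ((delta_mx 0 (0 : 'I_r.+1)) *+ i) i.
Proof.
split.
  exists (nseq i (delta_mx 0 0)); split; first by rewrite size_nseq.
  split.
    by move=> v; rewrite mem_nseq => /andP[_ /eqP ->]; exists 0; left.
  rewrite big_nseq; elim: i => [|i IH]; first by rewrite mulr0n.
  by rewrite iterS IH mulrS.
move=> s hw; have := entry_bound 0 hw.
by rewrite mulmxnE mxE !eqxx /= normr_nat !natz lez_nat.
Qed.

Lemma Pd_e0 r (i j : nat) : Pd i ((delta_mx 0 (0 : 'I_r.+1)) *+ j) -> (i %| j)%N.
Proof.
case=> y /matrixP /(_ 0 0); rewrite !mulmxnE mxE !eqxx /= => heq.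
have : (i%:Z %| j%:Z)%Z.
  by rewrite -natz heq -mulr_natr natz dvdz_mull // dvdzz.
by [].
Qed.

Lemma aut_mul r (M : 'M[int]_r) : M \in unitmx -> is_aut (fun x : 'rV_r => x *m M).
Proof.
move=> hM; split; first by move=> x y; rewrite mulmxDl.
by exists (fun x => x *m invmx M) => x; [exact: mulmxK | exact: mulmxKV].
Qed.

Lemma aut_oppmul r (M : 'M[int]_r) : M \in unitmx -> is_aut (fun x : 'rV_r => (- x) *m M).
Proof.
move=> hM; split; first by move=> x y; rewrite opprD mulmxDl.
exists (fun x => - (x *m invmx M)) => x; first by rewrite mulmxK // opprK.
by rewrite opprK mulmxKV.
Qed.

Theorem mainTheorem9 (r : nat) (hr : (0 < r)%N) (n : nat) :
  exists f : 'I_n.+1 -> 'rV[int]_r,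
    [/\ (forall i, exists y k, [/\ same_orbit (f i) y, (k <= n)%N & word_length y k]),
        (forall i j, same_orbit (f i) (f j) -> i = j)
      & (forall y k, (k <= n)%N -> word_length y k -> exists i, same_orbit (f i) y)].
Proof.
case: r hr => // r _.
pose e0 := delta_mx 0 (0 : 'I_r.+1) : 'rV[int]_r.+1.
have idaut : is_aut (fun x : 'rV[int]_r.+1 => x).
  by split; [by [] | exists id].
exists (fun i : 'I_n.+1 => e0 *+ i); split.
- move=> i; exists (e0 *+ i), i; split; last exact: wl_e0.
  + by exists id.
  + by rewrite -ltnS.
- move=> i j hij; apply: val_inj => /=; apply/eqP; rewrite eqn_dvd.
  apply/andP; split.
    by apply: (@Pd_e0 r); apply: (Pd_orbit hij); exists e0.
  by apply: (@Pd_e0 r); apply: (Pd_orbit (same_orbit_sym hij)); exists e0.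
move=> y k hk [[s [hs hw]] _].
have [L hL [R hR [d _ hy]]] := int_Smith_normal_form y.
set D := \matrix_(i, j) _ in hy.
pose c := (L *m D) 0 0.
have hD : L *m D = c *: e0.
  apply/matrixP => a b; rewrite (ord1 a) /c !mxE !big_ord1 !mxE.
  case: (eqVneq b 0) => [->|nb]; first by rewrite !eqxx mulr1.
  have nb' : (0 == b :> nat) = false.
    by apply/negbTE; apply: contra nb => /eqP h; apply/eqP/val_inj.
  by rewrite nb' andbF !mulr0n !mulr0.
rewrite hD in hy.
have hc : (absz c <= k)%N.
  have [->|cn0] := eqVneq c 0; first by [].
  have : ~~ [forall j, y 0 j == 0].
    apply/negP => /forallP hall.
    have y0 : y = 0 by apply/matrixP => a b; rewrite (ord1 a) mxE; apply/eqP.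
    move: hy; rewrite y0 => /(congr1 (fun x => x *m invmx R)).
    rewrite mulmxK // mul0mx => /matrixP /(_ 0 0); rewrite !mxE !eqxx mulr1.
    by move=> h; move: cn0; rewrite -h eqxx.
  move=> /forallPn [j hj].
  have hyj : y 0 j = c * R 0 j by rewrite hy -scalemxAl -rowE !mxE.
  apply: (@leq_trans (absz (y 0 j))).
    by apply: dvdn_leq; [rewrite absz_gt0 | rewrite hyj abszM dvdn_mulr].
  by have := entry_bound j hw; rewrite -abszE hs natz lez_nat.
have hcn : (absz c < n.+1)%N by rewrite ltnS (leq_trans hc hk).
exists (inord (absz c)); rewrite inordK //.
have [c0|c0] := leP 0 c.
  exists (fun x => x *m R); split; first exact: aut_mul.
  by rewrite hy -scaler_nat natz gez0_abs.
exists (fun x => (- x) *m R); split; first exact: aut_oppmul.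
by rewrite hy -scaler_nat natz ltz0_abs // scaleNr opprK.
Qed.
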